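(* Let $B$ be a non-abelian group, $H$ a finitely generated infinite group with fixed finite generating set $X=\{x_1,\dots,x_n\}$, $W=B\wr H$, and fix $a,b\in B$ with $ab\ne ba$. For $S\subseteq H$ define $\bar a,\bar b_S\in B^H$ by $\bar a(1)=a$, $\bar a(x)=1$ for $x\neq1$, and $\bar b_S(x)=b$ for $x\in S$, $\bar b_S(x)=1$ for $x\notin S$; let $G_S\le W$ be the subgroup generated by $H$, $\bar a$, $\bar b_S$, and $Y_S=(x_1,\dots,x_n,\bar a,\bar b_S)$. Then the map $\xi:2^H\to\mathcal G$, $\xi(S)=(G_S,Y_S)$, is injective.
   Context: $B^H$ is the group of all functions $H\to B$ with pointwise multiplication; $B\wr H=B^H\rtimes H$ with $(hfh^{-1})(x)=f(h^{-1}x)$. $2^H$ is the set of subsets of $H$. $\mathcal G$ is the space of finitely generated marked groups: pairs $(G,A)$ with $A$ a finite ordered generating tuple of $G$, where $(G,(a_1,\dots,a_m))\approx(G',(a'_1,\dots,a'_m))$ are identified iff $a_i\mapsto a'_i$ extends to an isomorphism (and a tuple is identified with itself extended by the identity element). *)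

(* Defs.v *)
From Stdlib Require Import List ClassicalDescription.
Import ListNotations.

Record Group := {
  gcar :> Type;
  gmul : gcar -> gcar -> gcar;
  gone : gcar;
  ginv : gcar -> gcar;
  gmulA : forall x y z, gmul x (gmul y z) = gmul (gmul x y) z;
  gmul1l : forall x, gmul gone x = x;
  gmulVl : forall x, gmul (ginv x) x = gone }.
Arguments gmul {g}.
Arguments gone {g}.
Arguments ginv {g}.

Inductive gen {T : Type} (mul : T -> T -> T) (inv : T -> T) (one : T)
    (A : T -> Prop) : T -> Prop :=
  | gen_base x : A x -> gen mul inv one A x
  | gen_one : gen mul inv one A one
  | gen_mul x y : gen mul inv one A x -> gen mul inv one A y ->
                  gen mul inv one A (mul x y)
  | gen_inv x : gen mul inv one A x -> gen mul inv one A (inv x).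

(* Wreath product W = B wr H = B^H x| H, elements (f, h).
   (f,h)(g,k) = (f * (h.g), hk) where (h.g)(x) = g(h^-1 x). *)
Definition wr (B H : Group) : Type := ((H -> B) * H)%type.

Definition wmul {B H : Group} (u v : wr B H) : wr B H :=
  (fun x => gmul (fst u x) (fst v (gmul (ginv (snd u)) x)), gmul (snd u) (snd v)).

Definition wone {B H : Group} : wr B H := (fun _ => gone, gone).

Definition winv {B H : Group} (u : wr B H) : wr B H :=
  (fun x => ginv (fst u (gmul (snd u) x)), ginv (snd u)).

Definition wgen {B H : Group} (A : wr B H -> Prop) : wr B H -> Prop :=
  gen wmul winv wone A.

Definition hemb {B H : Group} (h : H) : wr B H := (fun _ => gone, h).

Definition abar {B H : Group} (a : B) : wr B H :=
  (fun x => if excluded_middle_informative (x = gone) then a else gone, gone).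

Definition bbar {B H : Group} (b : B) (S : H -> Prop) : wr B H :=
  (fun x => if excluded_middle_informative (S x) then b else gone, gone).

Definition GS {B H : Group} (a b : B) (S : H -> Prop) : wr B H -> Prop :=
  wgen (fun w => (exists h : H, w = hemb h) \/ w = abar a \/ w = bbar b S).

Definition YS {B H : Group} (X : list H) (a b : B) (S : H -> Prop)
  : list (wr B H) := map hemb X ++ [abar a; bbar b S].

(* Equality in the space of marked groups of (G, Y) and (G', Y') (subgroups of
   a common ambient group with operations mul, inv, one, tuples of equal
   length): the assignment Y_i |-> Y'_i extends to an isomorphism G -> G'. *)
Definition marked_equiv {T : Type} (mul : T -> T -> T)
    (G : T -> Prop) (Y : list T) (G' : T -> Prop) (Y' : list T) : Prop :=
  exists phi : T -> T,
    Forall2 (fun y y' => phi y = y') Y Y' /\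
    (forall u, G u -> G' (phi u)) /\
    (forall u v, G u -> G v -> phi (mul u v) = mul (phi u) (phi v)) /\
    (forall u v, G u -> G v -> phi u = phi v -> u = v) /\
    (forall v, G' v -> exists u, G u /\ phi u = v).

(* Main.v *)
Require Import Defs.
From Stdlib Require Import List.
From Stdlib Require Import Classical ClassicalDescription FunctionalExtensionality PropExtensionality.

Section G.
Variable G : Group.
Lemma g_idem (y : G) : gmul y y = y -> y = gone.
Proof. intro E. rewrite <- (gmul1l _ y). rewrite <- (gmulVl _ y) at 1.
  rewrite <- gmulA, E. apply gmulVl. Qed.
Lemma g_mulV (x : G) : gmul x (ginv x) = gone.
Proof. apply g_idem. rewrite gmulA. rewrite <- (gmulA _ x (ginv x) x).
  rewrite gmulVl. rewrite <- gmulA, gmul1l. reflexivity. Qed.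
Lemma g_mul1r (x : G) : gmul x gone = x.
Proof. rewrite <- (gmulVl _ x), gmulA, g_mulV, gmul1l. reflexivity. Qed.
Lemma g_inv1 : ginv (gone : G) = gone.
Proof. rewrite <- (g_mul1r (ginv gone)). apply gmulVl. Qed.
Lemma g_invu (s x : G) : gmul s x = gone -> s = ginv x.
Proof. intro E. rewrite <- (g_mul1r s), <- (g_mulV x), gmulA, E, gmul1l. reflexivity. Qed.
Lemma g_invK (x : G) : ginv (ginv x) = x.
Proof. symmetry. apply g_invu. apply g_mulV. Qed.
End G.

Section W.
Variables B H : Group.

Lemma comm_iff (u v : wr B H) : snd u = gone -> snd v = gone ->
  (wmul u v = wmul v u <-> forall x, gmul (fst u x) (fst v x) = gmul (fst v x) (fst u x)).
Proof.
  destruct u as [f s], v as [k t]; simpl; intros -> ->. unfold wmul; simpl.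
  rewrite g_inv1. split.
  - intros E x. apply (f_equal (fun p => fst p x)) in E; simpl in E.
    rewrite !gmul1l in E; exact E.
  - intros E. f_equal. apply functional_extensionality; intros x. rewrite !gmul1l. apply E.
Qed.

Lemma hemb_mul (x y : H) : @hemb B H (gmul x y) = wmul (hemb x) (hemb y).
Proof. unfold hemb, wmul; simpl. f_equal. apply functional_extensionality; intros.
  rewrite gmul1l; reflexivity. Qed.

Lemma hemb_one : @hemb B H gone = wone.
Proof. reflexivity. Qed.

Lemma wone_idem (u : wr B H) : wmul u u = u -> u = wone.
Proof.
  destruct u as [f s]. unfold wmul, wone; simpl. intro E. injection E as E1 E2.
  assert (s = gone) by (apply g_idem; exact E2). subst s.
  f_equal. apply functional_extensionality; intro x.
  apply (f_equal (fun F => F x)) in E1. simpl in E1.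
  rewrite g_inv1, gmul1l in E1. apply g_idem. exact E1.
Qed.

Lemma winv_hemb (v : wr B H) (x : H) : wmul v (hemb x) = wone -> v = hemb (ginv x).
Proof.
  destruct v as [f s]. unfold wmul, wone, hemb; simpl. intro E. injection E as E1 E2.
  f_equal.
  - apply functional_extensionality; intro y.
    apply (f_equal (fun F => F y)) in E1. simpl in E1. rewrite g_mul1r in E1. exact E1.
  - apply g_invu. exact E2.
Qed.

Definition cS (b : B) (S : H -> Prop) (g : H) : wr B H :=
  wmul (wmul (hemb (ginv g)) (bbar b S)) (hemb g).

Lemma cS_snd b S g : snd (cS b S g) = gone.
Proof. unfold cS, wmul, hemb, bbar; simpl. rewrite g_mul1r. apply gmulVl. Qed.

Lemma cS_fst1 b S g : fst (cS b S g) gone =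
  if excluded_middle_informative (S g) then b else gone.
Proof. unfold cS, wmul, hemb, bbar; simpl. rewrite g_mul1r, g_mul1r, gmul1l, g_invK. reflexivity. Qed.

Lemma P_iff (a b : B) (hab : gmul a b <> gmul b a) S g :
  wmul (abar a) (cS b S g) = wmul (cS b S g) (abar a) <-> ~ S g.
Proof.
  rewrite comm_iff; [| reflexivity | apply cS_snd]. split.
  - intros E Sg. specialize (E gone). rewrite cS_fst1 in E. simpl in E.
    destruct (excluded_middle_informative (S g)); [|contradiction].
    destruct (excluded_middle_informative (@gone H = gone)); [|congruence].
    apply hab; exact E.
  - intros nS x. unfold abar; cbn [fst]. destruct (excluded_middle_informative (x = gone)).
    + subst x. rewrite cS_fst1. destruct (excluded_middle_informative (S g)); [contradiction|].
      rewrite g_mul1r, gmul1l. reflexivity.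
    + rewrite g_mul1r, gmul1l. reflexivity.
Qed.

Lemma forall2_ext (phi : wr B H -> wr B H) L L' : forall X,
  Forall2 (fun y y' => phi y = y') (map hemb X ++ L) (map hemb X ++ L') ->
  (forall x, In x X -> phi (hemb x) = hemb x) /\ Forall2 (fun y y' => phi y = y') L L'.
Proof.
  induction X as [|x X IH]; simpl; intros F.
  - split; [intros _ []|exact F].
  - inversion F; subst. destruct (IH H5) as [A1 A2]. split; [|exact A2].
    intros y [<-|Hy]; auto.
Qed.

End W.

Theorem lemma3p4 (B H : Group) (X : list H) (a b : B)
  (hab : gmul a b <> gmul b a)
  (hX : forall h : H, gen gmul ginv gone (fun y => In y X) h)
  (hinf : ~ (exists l : list H, forall h : H, In h l)) :
  forall S T : H -> Prop,
    marked_equiv wmul (GS a b S) (YS X a b S) (GS a b T) (YS X a b T) ->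
    S = T.
Proof.
  intros S T [phi [F [Gm [Hm [Inj _]]]]].
  unfold YS in F. destruct (forall2_ext _ _ _ _ _ _ F) as [FX FL].
  inversion FL as [|? ? ? ? Ea F2]; subst. inversion F2 as [|? ? ? ? Eb _]; subst.
  assert (GSh : forall U (h : H), GS a b U (@hemb B H h)).
  { intros U h. apply gen_base. left. exists h. reflexivity. }
  assert (GSa : forall U, GS a b U (@abar B H a)).
  { intros U. apply gen_base. right; left; reflexivity. }
  assert (GSb : forall (U : H -> Prop), GS a b U (bbar b U)).
  { intros U. apply gen_base. right; right; reflexivity. }
  assert (Pone : phi wone = wone).
  { apply wone_idem. rewrite <- Hm by (rewrite <- hemb_one; apply GSh).
    rewrite <- hemb_one, <- hemb_mul, gmul1l. reflexivity. }
  assert (Ph : forall h, phi (hemb h) = hemb h).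
  { intros h. induction (hX h) as [x Hx| | x y _ IHx _ IHy | x _ IHx].
    - auto.
    - exact Pone.
    - rewrite hemb_mul, Hm by apply GSh. rewrite IHx, IHy. reflexivity.
    - apply winv_hemb. rewrite <- IHx, <- Hm by apply GSh.
      rewrite <- hemb_mul, gmulVl. exact Pone. }
  assert (Pc : forall g, phi (cS B H b S g) = cS B H b T g).
  { intros g. unfold cS.
    assert (GS a b S (wmul (hemb (ginv g)) (bbar b S))) by (apply gen_mul; [apply GSh|apply GSb]).
    rewrite Hm by auto. rewrite Hm by auto. rewrite !Ph, Eb. reflexivity. }
  assert (GSc : forall g, GS a b S (cS B H b S g)).
  { intros g. unfold cS. apply gen_mul; [apply gen_mul; [apply GSh|apply GSb]|apply GSh]. }
  assert (E : forall g, S g <-> T g).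
  { intros g.
    assert (PST : wmul (abar a) (cS B H b S g) = wmul (cS B H b S g) (abar a) ->
                  wmul (abar a) (cS B H b T g) = wmul (cS B H b T g) (abar a)).
    { intros E. rewrite <- Pc, <- Ea, <- !Hm by auto. rewrite E. reflexivity. }
    assert (PTS : wmul (abar a) (cS B H b T g) = wmul (cS B H b T g) (abar a) ->
                  wmul (abar a) (cS B H b S g) = wmul (cS B H b S g) (abar a)).
    { intros E. apply Inj; [apply gen_mul; [apply GSa|apply GSc]|apply gen_mul; [apply GSc|apply GSa]|]. rewrite (Hm (abar a)), (Hm (cS B H b S g)) by (apply GSa || apply GSc). rewrite Pc, Ea. exact E. }

    rewrite !P_iff in PST, PTS by exact hab.
    split; intros Hg; apply NNPP; intro Hn; [apply (PTS Hn) | apply (PST Hn)]; exact Hg. }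
  apply functional_extensionality; intro g. apply propositional_extensionality. apply E.
Qed.
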